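(* Let $q\in\mathbb{C}$ with $0<|q|<1$ and $l,m,n,u\in\mathbb{N}$. Then \[ \sum_{k=0}^\infty\frac{q^{k^2} (q)_{l+m+n-k}} {(q)_k (q)_{l-k}(q)_{m-k}(q)_{n-k} (q)_{u+k}} =\sum_{k=-\infty}^\infty\frac{(-1)^k q^{(5k^2-k)/2} (q)_{l+m}(q)_{l+n}(q)_{m+n}(q)_u} {(q)_{l-k}(q)_{m-k}(q)_{n-k}(q)_{u-k}(q)_{l+k}(q)_{m+k}(q)_{n+k}(q)_{u+k}}, \] and \[ \sum_{k=0}^\infty\frac{q^{k^2+k} (q)_{l+m+n-k+1}} {(q)_k (q)_{l-k}(q)_{m-k}(q)_{n-k}(q)_{u+k+1}} =\sum_{k=-\infty}^\infty\frac{(-1)^k q^{(5k^2+3k)/2} (q)_{l+m+1}(q)_{l+n+1}(q)_{m+n+1}(q)_u} {(q)_{l-k}(q)_{m-k}(q)_{n-k}(q)_{u-k}(q)_{l+k+1}(q)_{m+k+1}(q)_{n+k+1}(q)_{u+k+1}}. \]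
   Context: $(q)_n=(q;q)_n=(1-q)(1-q^2)\cdots(1-q^n)$ for $n\ge0$ (with $(q)_0=1$), and $1/(q)_n=0$ for $n<0$. *)

(* Defs.v *)
From HB Require Import structures.
From mathcomp Require Import all_boot all_order all_algebra.
From mathcomp Require Import complex.
From mathcomp Require Import reals.
Set Implicit Arguments. Unset Strict Implicit. Unset Printing Implicit Defensive.
Import Order.TTheory GRing.Theory Num.Theory.
Local Open Scope ring_scope.

Definition qpoch {F : comRingType} (q : F) (n : nat) : F :=
  \prod_(1 <= j < n.+1) (1 - q ^+ j).

(* 1/(q)_n for an integer n, with the convention 1/(q)_n = 0 for n < 0 *)
Definition qpinv {F : fieldType} (q : F) (n : int) : F :=
  match n with
  | Posz k => (qpoch q k)^-1
  | Negz _ => 0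
  end.

(* (q)_n for an integer index n >= 0 (only used at nonnegative indices) *)
Definition qpochz {F : comRingType} (q : F) (n : int) : F :=
  match n with
  | Posz k => qpoch q k
  | Negz _ => 1
  end.

Definition zsum {F : nmodType} (N : nat) (f : int -> F) : F :=
  \sum_(0 <= i < (2 * N).+1) f (i%:Z - N%:Z).

(* Main.v *)
Require Import Defs.
From HB Require Import structures.
From mathcomp Require Import all_boot all_order all_algebra.
From mathcomp Require Import complex.
From mathcomp Require Import reals.
From mathcomp Require Import ring lra zify.
Import Order.TTheory GRing.Theory Num.Theory.
Local Open Scope ring_scope.


Definition bz (r : int) : int :=
  match r with Posz n => ('C(n,2))%:Z | Negz n => ('C(n.+2,2))%:Z end.

Lemma bz2 r : bz r * 2 = r * (r - 1).
Proof.
case: r => n /=.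
  have h := mul_bin_diag n 1; rewrite bin1 in h.
  move: h; set C := 'C(n, 2); move=> h; nia.
have h := mul_bin_diag n.+2 1; rewrite bin1 /= in h.
rewrite NegzE; move: h; set C := 'C(n.+2, 2); move=> h; nia.
Qed.

Lemma bz_char x y : y * 2 = x * (x - 1) -> bz x = y.
Proof. by move=> h; apply: (@mulIf _ 2) => //; rewrite bz2 h. Qed.

Lemma bz_succ r : bz (r + 1) = bz r + r.
Proof. apply: bz_char; rewrite mulrDl bz2; ring. Qed.



Section QP.
Variable F : fieldType.
Variable q : F.
Hypothesis q0 : q != 0.
Hypothesis hq : forall n, (0 < n)%N -> q ^+ n != 1.

Notation P := (qpoch q).
Notation I := (qpinv q).
Notation Pz := (qpochz q).

Lemma qpochS n : P n.+1 = P n * (1 - q ^+ n.+1).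
Proof. by rewrite /qpoch big_nat_recr. Qed.

Lemma qpoch0 : P 0 = 1.
Proof. by rewrite /qpoch big_geq. Qed.

Lemma onesub_neq0 n : (0 < n)%N -> 1 - q ^+ n != 0.
Proof. by move=> /hq h; rewrite subr_eq0 eq_sym. Qed.

Lemma qpoch_neq0 n : P n != 0.
Proof.
elim: n => [|n IH]; first by rewrite qpoch0 oner_neq0.
by rewrite qpochS mulf_neq0 // onesub_neq0.
Qed.

Lemma qpinv_nat (n : nat) : I n = (P n)^-1.
Proof. by []. Qed.

Lemma qpinv_neg (x : int) : x < 0 -> I x = 0.
Proof. by case: x. Qed.

Lemma PI (n : nat) : P n * I n = 1.
Proof. by rewrite qpinv_nat divff // qpoch_neq0. Qed.

Lemma qpinv_rec (x : int) : I (x - 1) = (1 - q ^ x) * I x.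
Proof.
case: x => [[|n]|n].
- by rewrite expr0z subrr mul0r.
- have -> : (Posz n.+1 - 1) = Posz n by lia.
  rewrite !qpinv_nat qpochS invfM.
  rewrite mulrA (mulrC _ (P n)^-1) -mulrA divff ?mulr1 //.
  exact: onesub_neq0.
- have -> : (Negz n - 1) = Negz n.+1 by lia.
  by rewrite mulr0.
Qed.

Lemma qpinv_dn (x y : int) : y = x - 1 -> I y = (1 - q ^ x) * I x.
Proof. by move=> ->; apply: qpinv_rec. Qed.

Lemma qpochz_up (x y : int) (n : nat) : x = n%:Z -> y = n.+1%:Z ->
  Pz y = Pz x * (1 - q ^+ n.+1).
Proof. by move=> -> ->; rewrite /= qpochS. Qed.

Lemma expz_sub (m n : nat) : q ^ (m%:Z - n%:Z) = q ^+ m / q ^+ n.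
Proof.
by rewrite expfzDr // -exprnN exprnP.
Qed.

Lemma expz_nat (n : nat) : q ^ (n%:Z) = q ^+ n.
Proof. by []. Qed.

Lemma qn_neq0 n : q ^+ n != 0.
Proof. exact: expf_neq0. Qed.



Definition tS a b c s (j : nat) : F :=
  q ^+ (j*j + s*j) * Pz ((a+b+c+s)%N%:Z - j%:Z) * I (a%:Z - j%:Z)
  * I (b%:Z - j%:Z) * I (c%:Z - j%:Z) * I j%:Z * I (s + j)%N%:Z.

Definition HS a b c s (j : nat) : F :=
  - q ^ (c.+1%:Z - j%:Z) * (1 - q ^+ j) * (1 - q ^+ (s + j)) * tS a b c.+1 s j.

Lemma exp_subn (m n : nat) : (n <= m)%N -> q ^+ (m - n) = q ^+ m / q ^+ n.
Proof.
move=> h; rewrite -{2}(subnK h) exprD mulfK //; exact: qn_neq0.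
Qed.

Lemma tS_WZ a b c s j :
  (1 - q ^+ c.+1) * (1 - q ^+ (c + s).+1) * tS a b c.+1 s j
  - (1 - q ^+ (a + c + s).+1) * (1 - q ^+ (b + c + s).+1) * tS a b c s j
  = HS a b c s j.+1 - HS a b c s j.
Proof.
rewrite /HS /tS.
case: (leqP j a) => hja; last first.
  rewrite (@qpinv_neg (a%:Z - j%:Z)); last by lia.
  rewrite (@qpinv_neg (a%:Z - j.+1%:Z)); last by lia.
  by rewrite !(mulr0, mul0r) subrr.
set A := (a + b + c + s)%N.
have hA : (j <= A)%N by rewrite /A; lia.
rewrite (@qpochz_up (A%:Z - j%:Z) ((a + b + c.+1 + s)%N%:Z - j%:Z) (A - j)); [|lia|lia].
rewrite (_ : ((a + b + c.+1 + s)%N%:Z - j.+1%:Z) = A%:Z - j%:Z); last by lia.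
rewrite (@qpinv_dn (a%:Z - j%:Z) (a%:Z - j.+1%:Z)); last by lia.
rewrite (@qpinv_dn (b%:Z - j%:Z) (b%:Z - j.+1%:Z)); last by lia.
rewrite (@qpinv_dn (c.+1%:Z - j%:Z) (c.+1%:Z - j.+1%:Z)); last by lia.
rewrite (@qpinv_dn (c.+1%:Z - j%:Z) (c%:Z - j%:Z)); last by lia.
rewrite (@qpinv_dn (j.+1%:Z) (j%:Z)); last by lia.
rewrite (@qpinv_dn ((s + j.+1)%N%:Z) ((s + j)%N%:Z)); last by lia.
rewrite !expz_sub !expz_nat.
rewrite [q ^+ (A - j).+1]exprS exp_subn //.
rewrite (_ : q ^+ (j.+1 * j.+1 + s * j.+1) = q ^+ (j * j + s * j) * q ^+ (j + j + 1 + s)); last first.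
  by rewrite -!exprD; congr (_ ^+ _); lia.
rewrite /A !(addnS, addSn, exprS, exprD, expr1, expr0).
have := qn_neq0 j; have := qn_neq0 a; have := qn_neq0 b.
move: (q ^+ j) (q ^+ a) (q ^+ b) => x y z hz hy hx.
by field; rewrite ?hx ?hy ?hz ?q0.
Qed.


Lemma sum_vanish_ext (f : nat -> F) K M : (K <= M)%N ->
  (forall j, (K <= j)%N -> f j = 0) ->
  \sum_(0 <= j < M) f j = \sum_(0 <= j < K) f j.
Proof.
move=> hKM hf; rewrite (big_cat_nat _ (n := K)) //=.
rewrite [X in _ + X]big_nat_cond [X in _ + X]big1 ?addr0 //.
by move=> j /andP[/andP[hj _] _]; exact: hf.
Qed.

Definition RS a b c s : F :=
  P (a+b+s) * P (a+c+s) * P (b+c+s) * (P a)^-1 * (P (a+s))^-1 * (P b)^-1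
  * (P (b+s))^-1 * (P c)^-1 * (P (c+s))^-1.

Lemma tS_vanish a b c s j : (c < j)%N -> tS a b c s j = 0.
Proof.
by move=> h; rewrite /tS (@qpinv_neg (c%:Z - j%:Z)) ?mulr0 ?mul0r //; lia.
Qed.

Lemma sal a b c s : \sum_(0 <= j < c.+1) tS a b c s j = RS a b c s.
Proof.
elim: c => [|c IH].
  rewrite big_nat1 /tS /RS !subr0 !addn0 !mul0n !muln0 add0n /= expr0 mul1r qpoch0 invr1 !mulr1.
  by field; rewrite ?qpoch_neq0.
have hk1 : (1 - q ^+ c.+1) * (1 - q ^+ (c + s).+1) != 0.
  by rewrite mulf_neq0 // onesub_neq0.
have WZ : \sum_(0 <= j < c.+3) ((1 - q ^+ c.+1) * (1 - q ^+ (c + s).+1) * tS a b c.+1 s j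
  - (1 - q ^+ (a + c + s).+1) * (1 - q ^+ (b + c + s).+1) * tS a b c s j)
  = HS a b c s c.+3 - HS a b c s 0.
  by rewrite -telescope_sumr //; apply: eq_big_nat => j _; exact: tS_WZ.
have H0 : HS a b c s 0 = 0 by rewrite /HS expr0 subrr !(mulr0, mul0r).
have H3 : HS a b c s c.+3 = 0 by rewrite /HS tS_vanish; [rewrite mulr0 | lia].
rewrite H0 H3 subr0 big_split /= sumrN -!mulr_sumr in WZ.
rewrite (@sum_vanish_ext _ c.+2 c.+3) in WZ; [|lia|by move=> j hj; rewrite tS_vanish //; lia].
rewrite (@sum_vanish_ext _ c.+1 c.+3) in WZ; [|lia|by move=> j hj; rewrite tS_vanish //; lia].
rewrite IH in WZ.
move/eqP: WZ; rewrite subr_eq0 => /eqP WZ.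
apply: (mulfI hk1); rewrite WZ /RS.
rewrite !addnS !addSn !qpochS.
by field; rewrite ?qpoch_neq0 ?onesub_neq0.
Qed.


Definition tV a b s (j : nat) : F :=
  q ^+ (j*j + s*j) * I (a%:Z - j%:Z) * I (b%:Z - j%:Z) * I j%:Z * I (s + j)%N%:Z.

Definition HV a b s (j : nat) : F :=
  - q ^ (b.+1%:Z - j%:Z) * (1 - q ^+ j) * (1 - q ^+ (s + j)) * tV a b.+1 s j.

Lemma tV_WZ a b s j :
  (1 - q ^+ b.+1) * (1 - q ^+ (b + s).+1) * tV a b.+1 s j
  - (1 - q ^+ (a + b + s).+1) * tV a b s j
  = HV a b s j.+1 - HV a b s j.
Proof.
rewrite /HV /tV.
case: (leqP j a) => hja; last first.
  rewrite (@qpinv_neg (a%:Z - j%:Z)); last by lia.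
  rewrite (@qpinv_neg (a%:Z - j.+1%:Z)); last by lia.
  by rewrite !(mulr0, mul0r) subrr.
rewrite (@qpinv_dn (a%:Z - j%:Z) (a%:Z - j.+1%:Z)); last by lia.
rewrite (@qpinv_dn (b.+1%:Z - j%:Z) (b.+1%:Z - j.+1%:Z)); last by lia.
rewrite (@qpinv_dn (b.+1%:Z - j%:Z) (b%:Z - j%:Z)); last by lia.
rewrite (@qpinv_dn (j.+1%:Z) (j%:Z)); last by lia.
rewrite (@qpinv_dn ((s + j.+1)%N%:Z) ((s + j)%N%:Z)); last by lia.
rewrite !expz_sub !expz_nat.
rewrite (_ : q ^+ (j.+1 * j.+1 + s * j.+1) = q ^+ (j * j + s * j) * q ^+ (j + j + 1 + s)); last first.
  by rewrite -!exprD; congr (_ ^+ _); lia.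
rewrite !(addnS, addSn, exprS, exprD, expr1, expr0).
have := qn_neq0 j; have := qn_neq0 a.
move: (q ^+ j) (q ^+ a) => x y hy hx.
by field; rewrite ?hx ?hy ?q0.
Qed.

Definition RV a b s : F :=
  P (a+b+s) * (P a)^-1 * (P (a+s))^-1 * (P b)^-1 * (P (b+s))^-1.

Lemma tV_vanish a b s j : (b < j)%N -> tV a b s j = 0.
Proof.
by move=> h; rewrite /tV (@qpinv_neg (b%:Z - j%:Z)) ?mulr0 ?mul0r //; lia.
Qed.

Lemma vand a b s : \sum_(0 <= j < b.+1) tV a b s j = RV a b s.
Proof.
elim: b => [|b IH].
  rewrite big_nat1 /tV /RV !subr0 !addn0 !mul0n !muln0 add0n /= expr0 mul1r qpoch0 invr1 !mulr1.
  by field; rewrite ?qpoch_neq0.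
have hk1 : (1 - q ^+ b.+1) * (1 - q ^+ (b + s).+1) != 0.
  by rewrite mulf_neq0 // onesub_neq0.
have WZ : \sum_(0 <= j < b.+3) ((1 - q ^+ b.+1) * (1 - q ^+ (b + s).+1) * tV a b.+1 s j
  - (1 - q ^+ (a + b + s).+1) * tV a b s j)
  = HV a b s b.+3 - HV a b s 0.
  by rewrite -telescope_sumr //; apply: eq_big_nat => j _; exact: tV_WZ.
have H0 : HV a b s 0 = 0 by rewrite /HV expr0 subrr !(mulr0, mul0r).
have H3 : HV a b s b.+3 = 0 by rewrite /HV tV_vanish; [rewrite mulr0 | lia].
rewrite H0 H3 subr0 big_split /= sumrN -!mulr_sumr in WZ.
rewrite (@sum_vanish_ext _ b.+2 b.+3) in WZ; [|lia|by move=> j hj; rewrite tV_vanish //; lia].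
rewrite (@sum_vanish_ext _ b.+1 b.+3) in WZ; [|lia|by move=> j hj; rewrite tV_vanish //; lia].
rewrite IH in WZ.
move/eqP: WZ; rewrite subr_eq0 => /eqP WZ.
apply: (mulfI hk1); rewrite WZ /RV.
rewrite !addnS !addSn !qpochS.
by field; rewrite ?qpoch_neq0 ?onesub_neq0.
Qed.


Definition zwin (lo : int) (M : nat) : seq int := map (fun i : nat => lo + i%:Z) (iota 0 M).
Definition zwinr (c : int) (M : nat) : seq int := map (fun i : nat => c - i%:Z) (iota 0 M).

Lemma zwin_uniq lo M : uniq (zwin lo M).
Proof.
rewrite map_inj_uniq ?iota_uniq // => i j /= /addrI h; by case: h.
Qed.

Lemma zwinr_uniq c M : uniq (zwinr c M).
Proof.
rewrite map_inj_uniq ?iota_uniq // => i j /= /addrI /oppr_inj h; by case: h.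
Qed.

Lemma mem_zwin lo M r : (r \in zwin lo M) = (lo <= r) && (r < lo + M%:Z).
Proof.
apply/mapP/idP.
  by move=> [ii]; rewrite mem_iota => /andP[_ hi] ->; apply/andP; split; lia.
move=> /andP[h1 h2]; exists (absz (r - lo)); last by lia.
by rewrite mem_iota; lia.
Qed.

Lemma mem_zwinr c M r : (r \in zwinr c M) = (c - M%:Z < r) && (r <= c).
Proof.
apply/mapP/idP.
  by move=> [ii]; rewrite mem_iota => /andP[_ hi] ->; apply/andP; split; lia.
move=> /andP[h1 h2]; exists (absz (c - r)); last by lia.
by rewrite mem_iota; lia.
Qed.

Lemma big_supp (s1 s2 S : seq int) (f : int -> F) :
  uniq s1 -> uniq s2 -> {subset S <= s1} -> {subset S <= s2} ->
  (forall r, r \notin S -> f r = 0) ->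
  \sum_(r <- s1) f r = \sum_(r <- s2) f r.
Proof.
move=> u1 u2 h1 h2 hf.
rewrite (bigID (fun r => r \in S)) [in RHS](bigID (fun r => r \in S)) /=.
rewrite [X in _ + X]big1 ?addr0; last by move=> r /hf.
rewrite [X in _ = _ + X]big1 ?addr0; last by move=> r /hf.
rewrite -(big_filter s1) -(big_filter s2).
apply: perm_big; apply: uniq_perm; rewrite ?filter_uniq //.
move=> r; rewrite !mem_filter; case hr: (r \in S) => //=.
by rewrite (h1 _ hr) (h2 _ hr).
Qed.

Lemma zsum_win N (f : int -> F) : zsum N f = \sum_(r <- zwin (- N%:Z) (2 * N).+1) f r.
Proof.
rewrite /zsum /zwin big_map /index_iota subn0; apply: eq_bigr => i _; by rewrite addrC.
Qed.

Lemma natsum_win M (f : int -> F) : \sum_(0 <= i < M) f i%:Z = \sum_(r <- zwin 0 M) f r.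
Proof.
rewrite /zwin big_map /index_iota subn0; apply: eq_bigr => i _; by rewrite add0r.
Qed.

Lemma natsum_winr c M (f : int -> F) : \sum_(0 <= i < M) f (c - i%:Z) = \sum_(r <- zwinr c M) f r.
Proof. by rewrite /zwinr big_map /index_iota subn0. Qed.

Lemma sub_zwin lo M lo' M' : lo' <= lo -> lo + M%:Z <= lo' + M'%:Z ->
  {subset zwin lo M <= zwin lo' M'}.
Proof. move=> h1 h2 r; rewrite !mem_zwin => /andP[a b]; apply/andP; split; lia. Qed.

Lemma sub_zwin_r lo M c M' : c - M'%:Z < lo -> lo + M%:Z <= c + 1 ->
  {subset zwin lo M <= zwinr c M'}.
Proof. move=> h1 h2 r; rewrite mem_zwin mem_zwinr => /andP[a b]; apply/andP; split; lia. Qed.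

Lemma notin_zwin lo M r : r \notin zwin lo M -> (r < lo) \/ (lo + M%:Z <= r).
Proof. rewrite mem_zwin; move/negP => h. case: (ltP r lo) => h1; [by left|right]. 
case: (ltP r (lo + M%:Z)) => h2 //; exfalso; apply: h; apply/andP; split; lia. Qed.

Lemma sumr_recr (f : nat -> F) n :
  \sum_(0 <= i < n.+1) f i = \sum_(0 <= i < n) f i + f n.
Proof. by rewrite big_nat_recr. Qed.

Lemma sumr_recl (f : nat -> F) n :
  \sum_(0 <= i < n.+1) f i = f 0%N + \sum_(0 <= i < n) f i.+1.
Proof. by rewrite big_nat_recl. Qed.

Definition cQ (i : nat) : F := (-1) ^+ i * q ^+ 'C(i, 2).
Definition SQ n (z : F) := \sum_(0 <= i < n.+1) cQ i * z ^+ i * I i%:Z * I (n%:Z - i%:Z).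

Lemma pascal n (i : nat) :
  (1 - q ^+ n.+1) * (I i%:Z * I (n.+1%:Z - i%:Z))
  = q ^+ i * (I i%:Z * I (n%:Z - i%:Z)) + I (i%:Z - 1) * I (n.+1%:Z - i%:Z).
Proof.
rewrite (@qpinv_dn (n.+1%:Z - i%:Z) (n%:Z - i%:Z)); last by lia.
rewrite (@qpinv_dn (i%:Z) (i%:Z - 1)) //.
rewrite expz_sub expz_nat.
have := qn_neq0 i; move: (q ^+ i) => x hx.
by field; rewrite hx.
Qed.

Lemma cQS i : cQ i.+1 = - (cQ i * q ^+ i).
Proof. by rewrite /cQ binS bin1 exprS exprD; ring. Qed.

Lemma SQ_rec n z : (1 - q ^+ n.+1) * SQ n.+1 z = (1 - z) * SQ n (q * z).
Proof.
rewrite /SQ mulr_sumr.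
rewrite (eq_bigr (fun i => cQ i * (q * z) ^+ i * I i%:Z * I (n%:Z - i%:Z)
   + cQ i * z ^+ i * I (i%:Z - 1) * I (n.+1%:Z - i%:Z))); last first.
  move=> i _; rewrite exprMn.
  transitivity (cQ i * z ^+ i * ((1 - q ^+ n.+1) * (I i%:Z * I (n.+1%:Z - i%:Z)))); first by ring.
  rewrite pascal; ring.
rewrite big_split /=.
rewrite [X in X + _ = _]sumr_recr.
rewrite (@qpinv_neg (n%:Z - n.+1%:Z)); last by lia.
rewrite mulr0 addr0.
rewrite [X in _ + X = _]sumr_recl.
rewrite (@qpinv_neg (0%:Z - 1)) // mulr0 mul0r add0r.
rewrite [X in _ + X = _](eq_bigr (fun i => - z * (cQ i * (q * z) ^+ i * I i%:Z * I (n%:Z - i%:Z)))); last first.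
  move=> i _; cbv beta; rewrite cQS exprS exprMn.
  rewrite (_ : (i.+1%:Z - 1) = i%:Z); last by lia.
  rewrite (_ : (n.+1%:Z - i.+1%:Z) = n%:Z - i%:Z); last by lia.
  ring.
rewrite -mulr_sumr; ring.
Qed.

Lemma QB n z : P n * SQ n z = \prod_(0 <= t < n) (1 - z * q ^+ t).
Proof.
elim: n z => [|n IH] z.
  rewrite /SQ big_nat1 big_geq // qpoch0 /cQ /= !expr0 !mulr1.
  by rewrite addn0 qpoch0 invr1 !mulr1 ?mul1r.
rewrite qpochS -mulrA SQ_rec mulrCA IH big_nat_recl //= expr0 mulr1.
congr (_ * _); apply: eq_bigr => t _; by rewrite exprS mulrA (mulrC z).
Qed.



Lemma sign_sub (j i : nat) : (-1 : F) ^ (j%:Z - i%:Z) = (-1) ^+ j * (-1) ^+ i.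
Proof.
rewrite expfzDr ?oppr_eq0 ?oner_eq0 // -exprnN invr_sign //.
Qed.

Lemma bz_sub (j i : nat) : bz (j%:Z - i%:Z) = bz j%:Z + ('C(i,2))%:Z + i%:Z * (1 - j%:Z).
Proof.
apply: bz_char; have h1 := bz2 j%:Z; have h2 := bz2 i%:Z; rewrite /= in h2.
rewrite !mulrDl h1 h2; ring.
Qed.

Lemma qpoch_prod n : P n = \prod_(0 <= t < n) (1 - q * q ^+ t).
Proof.
rewrite /qpoch big_add1 /=; apply: eq_bigr => t _; by rewrite exprS.
Qed.

Lemma SQ_eq n z : SQ n z = (\prod_(0 <= t < n) (1 - z * q ^+ t)) / P n.
Proof.
by rewrite -QB mulrC mulKf // qpoch_neq0.
Qed.

Lemma Uid (j e N : nat) : (j + e <= N)%N ->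
  zsum N (fun r => (-1) ^ r * q ^ (bz r) * I (j%:Z - r) * I (j%:Z + r + e%:Z))
  = (j == 0%N)%:R.
Proof.
move=> hN; rewrite zsum_win.
pose f := fun r : int => (-1) ^ r * q ^ (bz r) * I (j%:Z - r) * I (j%:Z + r + e%:Z).
rewrite (@big_supp _ (zwinr j (2*j+e).+1) (zwinr j (2*j+e).+1) f); first last.
- move=> r hr; rewrite /f.
  case: (ltP j%:Z r) => h1.
    by rewrite (@qpinv_neg (j%:Z - r)) ?mulr0 ?mul0r //; lia.
  case: (ltP (j%:Z - (2*j+e).+1%:Z) r) => h2.
    by exfalso; move/negP: hr; apply; rewrite mem_zwinr; apply/andP; split.
  by rewrite (@qpinv_neg (j%:Z + r + e%:Z)) ?mulr0 //; lia.
- by [].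
- by move=> r; rewrite mem_zwinr mem_zwin => /andP[h1 h2]; apply/andP; split; lia.
- exact: zwinr_uniq.
- exact: zwin_uniq.
rewrite -natsum_winr.
rewrite (eq_bigr (fun i => ((-1) ^+ j * q ^ (bz j%:Z)) *
   (cQ i * (q ^ (1 - j%:Z)) ^+ i * I i%:Z * I ((2 * j + e)%N%:Z - i%:Z)))); last first.
  move=> i _; rewrite /f sign_sub bz_sub.
  rewrite [in LHS](expfzDr _ _ q0) [in LHS](expfzDr _ _ q0) -[q ^ ('C(i, 2))%:Z]exprnP.
  rewrite (_ : q ^ (i%:Z * (1 - j%:Z)) = (q ^ (1 - j%:Z)) ^+ i); last first.
    by rewrite -[X in _ = X]/((q ^ (1 - j%:Z)) ^ i%:Z) exprz_exp mulrC.
  rewrite (_ : j%:Z - (j%:Z - i%:Z) = i%:Z); last by lia.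
  rewrite (_ : j%:Z + (j%:Z - i%:Z) + e%:Z = (2 * j + e)%N%:Z - i%:Z); last by lia.
  rewrite /cQ; ring.
rewrite -mulr_sumr.
rewrite (_ : \sum_(0 <= i < (2 * j + e).+1) _ = SQ (2 * j + e) (q ^ (1 - j%:Z))) //.
rewrite SQ_eq.
clear f; case: j hN => [|j] hN.
  rewrite (_ : (2 * 0 + e)%N = e) // (_ : (1 - 0%:Z) = 1) // expr1z expr0 mul1r /bz bin0n /= expr0z mul1r -qpoch_prod divff //.
  exact: qpoch_neq0.
rewrite (big_cat_nat _ (n := j)) //=; last by lia.
rewrite [\prod_(j <= t < _) _]big_ltn; last by lia.
rewrite (_ : q ^ (1 - j.+1%:Z) * q ^+ j = 1); last first.
  rewrite (_ : 1 - j.+1%:Z = 0%:Z - j%:Z); last by lia.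
  by rewrite expz_sub expr0 mul1r mulVf // qn_neq0.
by rewrite subrr !(mul0r, mulr0).
Qed.



Definition vK u k e (r : int) (j : nat) : F :=
  q ^+ (j * j + e * j) * I (u%:Z - j%:Z) * I (k%:Z - j%:Z) * I (j%:Z - r) * I (j%:Z + r + e%:Z).
Definition vR u k e (r : int) : F :=
  q ^ (r * r + e%:Z * r) * P (u + k + e) * I (u%:Z - r) * I (u%:Z + r + e%:Z)
  * I (k%:Z - r) * I (k%:Z + r + e%:Z).

Lemma VK_nat u k e (n : nat) : \sum_(0 <= j < k.+1) vK u k e n%:Z j = vR u k e n%:Z.
Proof.
case: (ltnP k n) => hkn.
  rewrite /vR (@qpinv_neg (k%:Z - n%:Z)) ?mulr0 ?mul0r; last by lia.
  rewrite big_nat_cond big1 // => j /andP[/andP[_ hj] _].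
  by rewrite /vK (@qpinv_neg (j%:Z - n%:Z)) ?mulr0 ?mul0r //; lia.
case: (ltnP u n) => hun.
  rewrite /vR (@qpinv_neg (u%:Z - n%:Z)) ?mulr0 ?mul0r; last by lia.
  rewrite big_nat_cond big1 // => j /andP[/andP[_ hj] _].
  rewrite /vK; case: (ltnP j n) => hjn.
    by rewrite (@qpinv_neg (j%:Z - n%:Z)) ?mulr0 ?mul0r //; lia.
  by rewrite (@qpinv_neg (u%:Z - j%:Z)) ?mulr0 ?mul0r //; lia.
rewrite (big_cat_nat _ (n := n)) //=; last by lia.
rewrite big_nat_cond big1 ?add0r; last first.
  by move=> j /andP[/andP[_ hj] _]; rewrite /vK (@qpinv_neg (j%:Z - n%:Z)) ?mulr0 ?mul0r //; lia.
rewrite -{1}(add0n n) big_addn (_ : (k.+1 - n = (k - n).+1)%N); last by lia.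
rewrite (eq_bigr (fun i => q ^+ (n * n + e * n) * tV (u - n) (k - n) (2 * n + e) i)); last first.
  move=> i _; rewrite /vK /tV.
  rewrite (_ : q ^+ ((i + n) * (i + n) + e * (i + n)) = q ^+ (n * n + e * n) * q ^+ (i * i + (2 * n + e) * i)); last first.
    by rewrite -exprD; congr (_ ^+ _); nia.
  rewrite (_ : u%:Z - (i + n)%N%:Z = (u - n)%N%:Z - i%:Z); last by lia.
  rewrite (_ : k%:Z - (i + n)%N%:Z = (k - n)%N%:Z - i%:Z); last by lia.
  rewrite (_ : (i + n)%N%:Z - n%:Z = i%:Z); last by lia.
  rewrite (_ : (i + n)%N%:Z + n%:Z + e%:Z = (2 * n + e + i)%N%:Z); last by lia.
  ring.
rewrite -mulr_sumr vand /RV /vR.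
rewrite (_ : n%:Z * n%:Z + e%:Z * n%:Z = (n * n + e * n)%N%:Z); last by rewrite PoszD !PoszM.
rewrite (_ : u%:Z - n%:Z = (u - n)%N%:Z); last by lia.
rewrite (_ : k%:Z - n%:Z = (k - n)%N%:Z); last by lia.
rewrite (_ : u%:Z + n%:Z + e%:Z = (u - n + (2 * n + e))%N%:Z); last by lia.
rewrite (_ : k%:Z + n%:Z + e%:Z = (k - n + (2 * n + e))%N%:Z); last by lia.
rewrite (_ : (u - n + (k - n) + (2 * n + e))%N = (u + k + e)%N); last by lia.
rewrite !qpinv_nat expz_nat /=; ring.
Qed.

Lemma vK_sym u k e r j : vK u k e (- r - e%:Z) j = vK u k e r j.
Proof.
rewrite /vK (_ : j%:Z - (- r - e%:Z) = j%:Z + r + e%:Z); last by lia.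
rewrite (_ : j%:Z + (- r - e%:Z) + e%:Z = j%:Z - r); last by lia.
ring.
Qed.

Lemma vR_sym u k e r : vR u k e (- r - e%:Z) = vR u k e r.
Proof.
rewrite /vR (_ : (- r - e%:Z) * (- r - e%:Z) + e%:Z * (- r - e%:Z) = r * r + e%:Z * r); last by ring.
rewrite (_ : u%:Z - (- r - e%:Z) = u%:Z + r + e%:Z); last by lia.
rewrite (_ : u%:Z + (- r - e%:Z) + e%:Z = u%:Z - r); last by lia.
rewrite (_ : k%:Z - (- r - e%:Z) = k%:Z + r + e%:Z); last by lia.
rewrite (_ : k%:Z + (- r - e%:Z) + e%:Z = k%:Z - r); last by lia.
ring.
Qed.

Lemma VK u k e r : (e <= 1)%N -> \sum_(0 <= j < k.+1) vK u k e r j = vR u k e r.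
Proof.
move=> he; case: r => [n|n]; first exact: VK_nat.
have hr : Negz n = - (n.+1 - e)%N%:Z - e%:Z by rewrite NegzE; lia.
rewrite hr vR_sym -VK_nat; apply: eq_bigr => j _; exact: vK_sym.
Qed.



Definition sK l m n e (r : int) (k : nat) : F :=
  q ^+ (k * k + e * k) * Pz ((l + m + n + e)%N%:Z - k%:Z) * I (l%:Z - k%:Z)
  * I (m%:Z - k%:Z) * I (n%:Z - k%:Z) * I (k%:Z - r) * I (k%:Z + r + e%:Z).
Definition sR l m n e (r : int) : F :=
  q ^ (r * r + e%:Z * r) * P (l + m + e) * P (l + n + e) * P (m + n + e)
  * I (l%:Z - r) * I (m%:Z - r) * I (n%:Z - r)
  * I (l%:Z + r + e%:Z) * I (m%:Z + r + e%:Z) * I (n%:Z + r + e%:Z).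

Lemma SK_nat l m n e (t : nat) : \sum_(0 <= k < n.+1) sK l m n e t%:Z k = sR l m n e t%:Z.
Proof.
case: (ltnP n t) => hnt.
  rewrite /sR (@qpinv_neg (n%:Z - t%:Z)) ?mulr0 ?mul0r; last by lia.
  rewrite big_nat_cond big1 // => j /andP[/andP[_ hj] _].
  by rewrite /sK (@qpinv_neg (j%:Z - t%:Z)) ?mulr0 ?mul0r //; lia.
case: (ltnP l t) => hlt.
  rewrite /sR (@qpinv_neg (l%:Z - t%:Z)) ?mulr0 ?mul0r; last by lia.
  rewrite big_nat_cond big1 // => j /andP[/andP[_ hj] _].
  rewrite /sK; case: (ltnP j t) => hjt.
    by rewrite (@qpinv_neg (j%:Z - t%:Z)) ?mulr0 ?mul0r //; lia.
  by rewrite (@qpinv_neg (l%:Z - j%:Z)) ?mulr0 ?mul0r //; lia.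
case: (ltnP m t) => hmt.
  rewrite /sR (@qpinv_neg (m%:Z - t%:Z)) ?mulr0 ?mul0r; last by lia.
  rewrite big_nat_cond big1 // => j /andP[/andP[_ hj] _].
  rewrite /sK; case: (ltnP j t) => hjt.
    by rewrite (@qpinv_neg (j%:Z - t%:Z)) ?mulr0 ?mul0r //; lia.
  by rewrite (@qpinv_neg (m%:Z - j%:Z)) ?mulr0 ?mul0r //; lia.
rewrite (big_cat_nat _ (n := t)) //=; last by lia.
rewrite big_nat_cond big1 ?add0r; last first.
  by move=> j /andP[/andP[_ hj] _]; rewrite /sK (@qpinv_neg (j%:Z - t%:Z)) ?mulr0 ?mul0r //; lia.
rewrite -{1}(add0n t) big_addn (_ : (n.+1 - t = (n - t).+1)%N); last by lia.
rewrite (eq_bigr (fun i => q ^+ (t * t + e * t) * tS (l - t) (m - t) (n - t) (2 * t + e) i)); last first.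
  move=> i _; rewrite /sK /tS.
  rewrite (_ : q ^+ ((i + t) * (i + t) + e * (i + t)) = q ^+ (t * t + e * t) * q ^+ (i * i + (2 * t + e) * i)); last first.
    by rewrite -exprD; congr (_ ^+ _); nia.
  rewrite (_ : (l + m + n + e)%N%:Z - (i + t)%N%:Z = (l - t + (m - t) + (n - t) + (2 * t + e))%N%:Z - i%:Z); last by lia.
  rewrite (_ : l%:Z - (i + t)%N%:Z = (l - t)%N%:Z - i%:Z); last by lia.
  rewrite (_ : m%:Z - (i + t)%N%:Z = (m - t)%N%:Z - i%:Z); last by lia.
  rewrite (_ : n%:Z - (i + t)%N%:Z = (n - t)%N%:Z - i%:Z); last by lia.
  rewrite (_ : (i + t)%N%:Z - t%:Z = i%:Z); last by lia.
  rewrite (_ : (i + t)%N%:Z + t%:Z + e%:Z = (2 * t + e + i)%N%:Z); last by lia.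
  ring.
rewrite -mulr_sumr sal /RS /sR.
rewrite (_ : t%:Z * t%:Z + e%:Z * t%:Z = (t * t + e * t)%N%:Z); last by rewrite PoszD !PoszM.
rewrite (_ : l%:Z - t%:Z = (l - t)%N%:Z); last by lia.
rewrite (_ : m%:Z - t%:Z = (m - t)%N%:Z); last by lia.
rewrite (_ : n%:Z - t%:Z = (n - t)%N%:Z); last by lia.
rewrite (_ : l%:Z + t%:Z + e%:Z = (l - t + (2 * t + e))%N%:Z); last by lia.
rewrite (_ : m%:Z + t%:Z + e%:Z = (m - t + (2 * t + e))%N%:Z); last by lia.
rewrite (_ : n%:Z + t%:Z + e%:Z = (n - t + (2 * t + e))%N%:Z); last by lia.
rewrite (_ : (l - t + (m - t) + (2 * t + e))%N = (l + m + e)%N); last by lia.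
rewrite (_ : (l - t + (n - t) + (2 * t + e))%N = (l + n + e)%N); last by lia.
rewrite (_ : (m - t + (n - t) + (2 * t + e))%N = (m + n + e)%N); last by lia.
rewrite !qpinv_nat expz_nat /=; ring.
Qed.

Lemma sK_sym l m n e r k : sK l m n e (- r - e%:Z) k = sK l m n e r k.
Proof.
rewrite /sK (_ : k%:Z - (- r - e%:Z) = k%:Z + r + e%:Z); last by lia.
rewrite (_ : k%:Z + (- r - e%:Z) + e%:Z = k%:Z - r); last by lia.
ring.
Qed.

Lemma sR_sym l m n e r : sR l m n e (- r - e%:Z) = sR l m n e r.
Proof.
rewrite /sR (_ : (- r - e%:Z) * (- r - e%:Z) + e%:Z * (- r - e%:Z) = r * r + e%:Z * r); last by ring.
rewrite (_ : l%:Z - (- r - e%:Z) = l%:Z + r + e%:Z); last by lia.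
rewrite (_ : l%:Z + (- r - e%:Z) + e%:Z = l%:Z - r); last by lia.
rewrite (_ : m%:Z - (- r - e%:Z) = m%:Z + r + e%:Z); last by lia.
rewrite (_ : m%:Z + (- r - e%:Z) + e%:Z = m%:Z - r); last by lia.
rewrite (_ : n%:Z - (- r - e%:Z) = n%:Z + r + e%:Z); last by lia.
rewrite (_ : n%:Z + (- r - e%:Z) + e%:Z = n%:Z - r); last by lia.
ring.
Qed.

Lemma SK l m n e r : (e <= 1)%N -> \sum_(0 <= k < n.+1) sK l m n e r k = sR l m n e r.
Proof.
move=> he; case: r => [t|t]; first exact: SK_nat.
have hr : Negz t = - (t.+1 - e)%N%:Z - e%:Z by rewrite NegzE; lia.
rewrite hr sR_sym -SK_nat; apply: eq_bigr => j _; exact: sK_sym.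
Qed.



Lemma Dk u k e N : (e <= 1)%N -> (k + e <= N)%N ->
  zsum N (fun r => (-1) ^ r * q ^ (bz r) * vR u k e r) = I u%:Z * I k%:Z.
Proof.
move=> he hN.
transitivity (zsum N (fun r => \sum_(0 <= j < k.+1) (-1) ^ r * q ^ (bz r) * vK u k e r j)).
  by rewrite /zsum; apply: eq_bigr => i _; rewrite -VK // mulr_sumr.
rewrite /zsum exchange_big /=.
transitivity (\sum_(0 <= j < k.+1) q ^+ (j * j + e * j) * I (u%:Z - j%:Z) * I (k%:Z - j%:Z) * (j == 0%N)%:R).
  apply: eq_big_nat => j /andP[_ hj].
  rewrite -(@Uid j e N); last by lia.
  rewrite /zsum mulr_sumr; apply: eq_bigr => i _; rewrite /vK; ring.
rewrite sumr_recl big1 ?addr0; last by move=> j _; rewrite mulr0.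
by rewrite !muln0 add0n expr0 mul1r eqxx mulr1.
Qed.

Lemma Ipair u k e N : (e <= 1)%N -> (k + e <= N)%N ->
  I k%:Z * I (u%:Z + k%:Z + e%:Z) = P u * zsum N (fun r =>
    (-1) ^ r * q ^ (bz r) * q ^ (r * r + e%:Z * r) * I (u%:Z - r) * I (u%:Z + r + e%:Z)
    * (I (k%:Z - r) * I (k%:Z + r + e%:Z))).
Proof.
move=> he hN.
have hD := @Dk u k e N he hN.
have E : zsum N (fun r => (-1) ^ r * q ^ (bz r) * q ^ (r * r + e%:Z * r) * I (u%:Z - r) * I (u%:Z + r + e%:Z)
    * (I (k%:Z - r) * I (k%:Z + r + e%:Z)))
  = I (u + k + e)%N%:Z * zsum N (fun r => (-1) ^ r * q ^ (bz r) * vR u k e r).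
  rewrite /zsum mulr_sumr; apply: eq_bigr => i _; rewrite /vR.
  rewrite [I (u + k + e)%N%:Z]qpinv_nat.
  by field; rewrite qpoch_neq0.
rewrite E hD (_ : u%:Z + k%:Z + e%:Z = (u + k + e)%N%:Z) //.
rewrite [I u%:Z]qpinv_nat.
by field; rewrite qpoch_neq0.
Qed.

Lemma mainE l m n u e : (e <= 1)%N ->
  \sum_(0 <= k < (l + m + n + u).+1)
     q ^+ (k * k + e * k) * Pz ((l + m + n + e)%N%:Z - k%:Z) * I k%:Z * I (l%:Z - k%:Z)
     * I (m%:Z - k%:Z) * I (n%:Z - k%:Z) * I (u%:Z + k%:Z + e%:Z)
  = zsum (l + m + n + u).+1 (fun r =>
     P u * ((-1) ^ r * q ^ (bz r) * q ^ (r * r + e%:Z * r) * I (u%:Z - r) * I (u%:Z + r + e%:Z))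
     * sR l m n e r).
Proof.
move=> he; set N := (l + m + n + u).+1.
transitivity (\sum_(0 <= k < N) P u * zsum N (fun r =>
    ((-1) ^ r * q ^ (bz r) * q ^ (r * r + e%:Z * r) * I (u%:Z - r) * I (u%:Z + r + e%:Z))
    * sK l m n e r k)).
  apply: eq_big_nat => k /andP[_ hk].
  have := @Ipair u k e N he; rewrite /N => H.
  transitivity (q ^+ (k * k + e * k) * Pz ((l + m + n + e)%N%:Z - k%:Z) * I (l%:Z - k%:Z)
     * I (m%:Z - k%:Z) * I (n%:Z - k%:Z) * (I k%:Z * I (u%:Z + k%:Z + e%:Z))); first by ring.
  rewrite H; last by lia.
  rewrite /zsum !mulr_sumr; apply: eq_bigr => i _; rewrite /sK; ring.
rewrite -mulr_sumr /zsum exchange_big /= mulr_sumr; apply: eq_bigr => i _.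
rewrite -mulr_sumr (@sum_vanish_ext _ n.+1 N); last first.
- move=> k hk; rewrite /sK (@qpinv_neg (n%:Z - k%:Z)) ?mulr0 ?mul0r //; lia.
- rewrite /N; lia.
rewrite SK //; ring.
Qed.




End QP.


Lemma exp5a (k : int) : ((5 * k ^+ 2 - k) %/ 2)%Z = bz k + (k * k + 0%:Z * k) + (k * k + 0%:Z * k).
Proof.
rewrite (_ : 5 * k ^+ 2 - k = (2 * (k * k)) * 2 + k * (k - 1)); last by ring.
rewrite divzMDl // -bz2 mulzK //; ring.
Qed.

Lemma exp5b (k : int) : ((5 * k ^+ 2 + 3 * k) %/ 2)%Z = bz k + (k * k + 1%:Z * k) + (k * k + 1%:Z * k).
Proof.
rewrite (_ : 5 * k ^+ 2 + 3 * k = (2 * (k * k) + 2 * k) * 2 + k * (k - 1)); last by ring.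
rewrite divzMDl // -bz2 mulzK //; ring.
Qed.

Theorem corollary5p3 (R : realType) (q : R[i]) (l m n u : nat)
  (hq0 : 0 < `|q|) (hq1 : `|q| < 1) :
  let N := (l + m + n + u).+1 in
  (\sum_(0 <= k < N)
      q ^+ (k * k) * qpochz q (l%:Z + m%:Z + n%:Z - k%:Z)
      * qpinv q k%:Z * qpinv q (l%:Z - k%:Z) * qpinv q (m%:Z - k%:Z)
      * qpinv q (n%:Z - k%:Z) * qpinv q (u%:Z + k%:Z)
   = zsum N (fun k : int =>
      (-1) ^ k * q ^ ((5 * k ^+ 2 - k) %/ 2)%Z
      * qpoch q (l + m) * qpoch q (l + n) * qpoch q (m + n) * qpoch q u
      * qpinv q (l%:Z - k) * qpinv q (m%:Z - k) * qpinv q (n%:Z - k)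
      * qpinv q (u%:Z - k) * qpinv q (l%:Z + k) * qpinv q (m%:Z + k)
      * qpinv q (n%:Z + k) * qpinv q (u%:Z + k)))
  /\
  (\sum_(0 <= k < N)
      q ^+ (k * k + k) * qpochz q (l%:Z + m%:Z + n%:Z - k%:Z + 1)
      * qpinv q k%:Z * qpinv q (l%:Z - k%:Z) * qpinv q (m%:Z - k%:Z)
      * qpinv q (n%:Z - k%:Z) * qpinv q (u%:Z + k%:Z + 1)
   = zsum N (fun k : int =>
      (-1) ^ k * q ^ ((5 * k ^+ 2 + 3 * k) %/ 2)%Z
      * qpoch q (l + m).+1 * qpoch q (l + n).+1 * qpoch q (m + n).+1
      * qpoch q u
      * qpinv q (l%:Z - k) * qpinv q (m%:Z - k) * qpinv q (n%:Z - k)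
      * qpinv q (u%:Z - k) * qpinv q (l%:Z + k + 1) * qpinv q (m%:Z + k + 1)
      * qpinv q (n%:Z + k + 1) * qpinv q (u%:Z + k + 1))).
Proof.
move=> N.
have q0 : q != 0 by rewrite -normr_gt0.
have hq : forall k, (0 < k)%N -> q ^+ k != 1.
  move=> k hk; apply/eqP => h.
  have : `|q ^+ k| < 1 by rewrite normrX expr_lt1.
  by rewrite h normr1 ltxx.
split.
- apply: (etrans _ (etrans (@mainE _ q q0 hq l m n u 0 isT) _)).
  + rewrite /N; apply: eq_bigr => k _.
    by rewrite mul0n !addn0 addr0 !PoszD.
  + rewrite /N /zsum; apply: eq_bigr => i _.
    move: (_ - _) => r.
    rewrite /sR exp5a [in RHS](expfzDr _ _ q0) [in RHS](expfzDr _ _ q0) !addn0 !addr0.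
    ring.
- apply: (etrans _ (etrans (@mainE _ q q0 hq l m n u 1 isT) _)).
  + rewrite /N; apply: eq_bigr => k _.
    rewrite mul1n (_ : (l + m + n + 1)%N%:Z - k%:Z = l%:Z + m%:Z + n%:Z - k%:Z + 1); last by lia.
    by rewrite (_ : 1%:Z = 1).
  + rewrite /N /zsum; apply: eq_bigr => i _.
    move: (_ - _) => r.
    rewrite /sR exp5b [in RHS](expfzDr _ _ q0) [in RHS](expfzDr _ _ q0) !addn1 (_ : 1%:Z = 1) //.
    ring.
Qed.
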